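(* Let $u,w$ be words over $\{L,R\}$ such that $w$ starts with $R$ and $Ru$ is a tail of $w$. Then $LRu$ is reduced from $Lw$.
   Context: Words are finite strings (including the empty word) over $\{L,R\}$. A tail of $w$ is any word $v'$ with $w=vv'$ for some word $v$. A word $u$ is reduced from $w$ if it is obtained from $w$ by finitely many (possibly zero) successive applications of the reduction rules, where $v,v'$ are arbitrary words: (1) $vRRv'\Rightarrow vRv'$; (1') $vLLv'\Rightarrow vLv'$; (2) $vLRv'\Rightarrow vv'$; (2') $vRLv'\Rightarrow vv'$. *)

(* Defs.v *)
From Stdlib Require Import List Relations.
Import ListNotations.

Inductive letter : Type := L | R.
Definition word := list letter.

Inductive step : word -> word -> Prop :=
| step_RR : forall v v' : word, step (v ++ [R; R] ++ v') (v ++ [R] ++ v')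
| step_LL : forall v v' : word, step (v ++ [L; L] ++ v') (v ++ [L] ++ v')
| step_LR : forall v v' : word, step (v ++ [L; R] ++ v') (v ++ v')
| step_RL : forall v v' : word, step (v ++ [R; L] ++ v') (v ++ v').

Definition reduced_from (u w : word) : Prop := clos_refl_trans word step w u.

Definition is_tail (t w : word) : Prop := exists v : word, w = v ++ t.

(* Main.v *)
Require Import Defs.
From Stdlib Require Import List Relations Lia.
Import ListNotations.

Lemma keyQ (u : word) : forall n (x : word), length x <= n ->
  clos_refl_trans word step (L :: x ++ R :: u) (L :: R :: u).
Proof.
  induction n as [|n IH]; intros x Hx.
  - destruct x; simpl in Hx; [apply rt_refl | lia].
  - destruct x as [|[|] x']; simpl in *.
    + apply rt_refl.
    + eapply rt_trans; [apply rt_step; exact (step_LL [] (x' ++ R :: u)) |].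
      apply IH; lia.
    + destruct x' as [|[|] x'']; simpl in *.
      * apply rt_step; exact (step_RR [L] u).
      * eapply rt_trans; [apply rt_step; exact (step_RL [L] (x'' ++ R :: u)) |].
        apply IH; lia.
      * eapply rt_trans; [apply rt_step; exact (step_RR [L] (x'' ++ R :: u)) |].
        apply (IH (R :: x'')); simpl; lia.
Qed.

Theorem mainTheorem7 (u w : word) :
  (exists w' : word, w = R :: w') ->
  is_tail (R :: u) w ->
  reduced_from (L :: R :: u) (L :: w).
Proof.
  intros _ [v Hv]; subst w. unfold reduced_from.
  apply (keyQ u (length v) v); lia.
Qed.
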